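(* If $\Phi$ is the irreducible non-reduced root system of type $\mathsf{BC}_\ell$, then there is no low triple $(\lambda,\mu,\nu)$ of dominant weights of $\Phi$.
   Context: $\Phi$ of type $\mathsf{BC}_\ell$ is the union of a root system of type $\mathsf B_\ell$ (square lengths $1,2$) and one of type $\mathsf C_\ell$ (square lengths $2,4$), with basis $\Delta=\{\alpha_1,\dots,\alpha_\ell\}$ the basis of $\mathsf B_\ell$ in Bourbaki numbering, $\alpha_\ell$ being the unique simple root with $2\alpha_\ell\in\Phi$. Integral weights are those $\lambda$ with $\langle\lambda,\alpha^\vee\rangle\in\mathbb Z$ for all $\alpha\in\Phi$; the fundamental weights $\omega_1,\dots,\omega_\ell$ are dual to $\alpha_1^\vee,\dots,\alpha_{\ell-1}^\vee,(2\alpha_\ell)^\vee$ (those of $\mathsf C_\ell$); dominant weights are $\mathbb N$-combinations of them. Order: $\mu\le\lambda$ iff $\lambda-\mu$ is a nonnegative integer combination of simple roots. A triple $(\lambda,\mu,\nu)$ of dominant weights is a low triple if (i) whenever $\lambda',\mu'$ are dominant with $\lambda'\le\lambda$, $\mu'\le\mu$, $\nu\le\lambda'+\mu'$, then $\lambda'=\lambda$, $\mu'=\mu$; and (ii) $\nu+\sum_{i=1}^\ell\alpha_i\le\lambda+\mu$. *)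

(* Defs.v *)
From mathcomp Require Import all_boot all_order all_algebra.
Set Implicit Arguments. Unset Strict Implicit. Unset Printing Implicit Defensive.
Import Order.TTheory GRing.Theory Num.Theory.
Local Open Scope ring_scope.

Section BC.
Variable l : nat.

Definition vec := 'rV[rat]_l.

(* standard basis vector e_k (k counted from 0) *)
Definition e (k : nat) : vec := \row_(j < l) ((j == k :> nat)%:R).

Definition dot (u v : vec) : rat := \sum_(k < l) u 0 k * v 0 k.

Definition isRoot (v : vec) : Prop :=
  exists i j : 'I_l,
    v = e i \/ v = - e i \/ v = 2%:R *: e i \/ v = - (2%:R *: e i) \/
    (i != j /\ (v = e i + e j \/ v = e i - e j \/ v = - e i - e j)).

Definition coroot (a : vec) : vec := (2%:R / dot a a) *: a.

Definition pairing (x a : vec) : rat := dot x (coroot a).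

Definition isInt (x : rat) : Prop := exists z : int, x = z%:~R.

Definition integral_weight (x : vec) : Prop :=
  forall a, isRoot a -> isInt (pairing x a).

(* simple roots (Bourbaki numbering, shifted to start at 0):
   alpha_i = e_i - e_{i+1} for i < l-1, alpha_{l-1} = e_{l-1} *)
Definition simple_root (i : 'I_l) : vec :=
  if (i.+1 < l)%N then e i - e i.+1 else e i.

Definition simple_root_C (i : 'I_l) : vec :=
  if (i.+1 < l)%N then simple_root i else 2%:R *: simple_root i.

Definition is_fundamental (i : 'I_l) (w : vec) : Prop :=
  forall j : 'I_l, pairing w (simple_root_C j) = (i == j)%:R.

Definition dominant (x : vec) : Prop :=
  exists (w : 'I_l -> vec) (c : 'I_l -> nat),
    integral_weight x /\ (forall i, is_fundamental i (w i)) /\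
    x = \sum_(i < l) (c i)%:R *: w i.

Definition wle (mu la : vec) : Prop :=
  exists c : 'I_l -> nat, la - mu = \sum_(i < l) (c i)%:R *: simple_root i.

Definition low_triple (la mu nu : vec) : Prop :=
  (forall la' mu' : vec, dominant la' -> dominant mu' ->
     wle la' la -> wle mu' mu -> wle nu (la' + mu') ->
     la' = la /\ mu' = mu) /\
  wle (nu + \sum_(i < l) simple_root i) (la + mu).

End BC.

(* Main.v *)
Require Import Defs.
From mathcomp Require Import all_boot all_order all_algebra.
From mathcomp Require Import ring lra zify.
Set Implicit Arguments. Unset Strict Implicit. Unset Printing Implicit Defensive.
Import Order.TTheory GRing.Theory Num.Theory.
Local Open Scope ring_scope.

Lemma dotC {l} (u v : vec l) : dot u v = dot v u.
Proof. by apply: eq_bigr => i _; rewrite mulrC. Qed.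

Lemma dotDl {l} (u v w : vec l) : dot (u + v) w = dot u w + dot v w.
Proof. by rewrite /dot -big_split; apply: eq_bigr => i _; rewrite !mxE mulrDl. Qed.

Lemma dotNl {l} (u w : vec l) : dot (- u) w = - dot u w.
Proof. by rewrite /dot -sumrN; apply: eq_bigr => i _; rewrite !mxE mulNr. Qed.

Lemma dotZl {l} (a : rat) (u w : vec l) : dot (a *: u) w = a * dot u w.
Proof. by rewrite /dot mulr_sumr; apply: eq_bigr => i _; rewrite !mxE mulrA. Qed.

Lemma dot0l {l} (w : vec l) : dot 0 w = 0.
Proof. by rewrite /dot big1 // => i _; rewrite mxE mul0r. Qed.

Lemma dotBl {l} (u v w : vec l) : dot (u - v) w = dot u w - dot v w.
Proof. by rewrite dotDl dotNl. Qed.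

Lemma dotDr {l} (u v w : vec l) : dot w (u + v) = dot w u + dot w v.
Proof. by rewrite !(dotC w) dotDl. Qed.
Lemma dotNr {l} (u w : vec l) : dot w (- u) = - dot w u.
Proof. by rewrite !(dotC w) dotNl. Qed.
Lemma dotZr {l} a (u w : vec l) : dot w (a *: u) = a * dot w u.
Proof. by rewrite !(dotC w) dotZl. Qed.
Lemma dotBr {l} (u v w : vec l) : dot w (u - v) = dot w u - dot w v.
Proof. by rewrite dotDr dotNr. Qed.

Lemma dot_suml {l} (c : 'I_l -> rat) (w : 'I_l -> vec l) a :
  dot (\sum_(i < l) c i *: w i) a = \sum_(i < l) c i * dot (w i) a.
Proof.
rewrite /dot; under eq_bigr do rewrite summxE mulr_suml.
rewrite exchange_big; apply: eq_bigr => i _.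
rewrite mulr_sumr; apply: eq_bigr => k _.
by rewrite !mxE mulrA.
Qed.

Lemma sum_delta {l} (f : 'I_l -> rat) (k0 : 'I_l) :
  \sum_(i < l) f i * (i == k0 :> nat)%:R = f k0.
Proof.
rewrite (bigD1 k0) //= eqxx mulr1 big1 ?addr0 // => i Hi.
by rewrite (_ : (i == k0 :> nat) = false) ?mulr0 //; apply: negbTE.
Qed.

Lemma dot_ee {l} (m n : nat) :
  dot (e l m) (e l n) = ((m == n) && (m < l)%N)%:R.
Proof.
rewrite /dot; under eq_bigr do rewrite !mxE.
case: (ltnP m l) => Hm.
  rewrite andbT -(sum_delta (fun i : 'I_l => (i == n :> nat)%:R) (Ordinal Hm)) /=.
  by apply: eq_bigr => i _; rewrite mulrC.
rewrite andbF big1 // => k _.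
have -> : (k == m :> nat) = false.
  by apply/negbTE; rewrite neq_ltn (leq_trans (ltn_ord k)).
by rewrite mul0r.
Qed.

Lemma e_ge {l} m : (l <= m)%N -> e l m = 0.
Proof.
move=> H; apply/rowP => k; rewrite !mxE.
have -> : (k == m :> nat) = false.
  by apply/negbTE; rewrite neq_ltn (leq_trans (ltn_ord k)).
by [].
Qed.

Lemma dot_e {l} (u : vec l) (k : 'I_l) : dot u (e l k) = u 0 k.
Proof.
rewrite /dot -(sum_delta (fun i => u 0 i) k); apply: eq_bigr => i _.
by rewrite mxE.
Qed.

Lemma simple_rootE {l} (i : 'I_l) : simple_root i = e l i - e l i.+1.
Proof.
rewrite /simple_root; case: ifP => // H.
by rewrite (e_ge (l:=l) (m:=i.+1)) ?subr0 // leqNgt H.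
Qed.

Lemma pairing_sC {l} (u : vec l) (k : 'I_l) :
  pairing u (simple_root_C k) = dot u (e l k) - dot u (e l k.+1).
Proof.
rewrite /pairing /coroot /simple_root_C /simple_root.
have h1 : (k == k.+1 :> nat) = false by rewrite eqn_leq ltnn andbF.
have h2 : (k.+1 == k :> nat) = false by rewrite eqn_leq ltnn.
case H: (k.+1 < l)%N.
  rewrite !dotBl !dotBr !dot_ee eqxx ltn_ord H h1 h2 /=.
  rewrite eqxx /=.
  have -> : (2 / (1 - 0 - (0 - 1)) : rat) = 1 by [].
  by rewrite scale1r dotBr.
have -> : e l k.+1 = 0 by apply: e_ge; rewrite leqNgt H.
rewrite scalerA !dotZl !dotZr dot_ee eqxx ltn_ord /=.
have -> : (2 / (2 * (2 * 1)) * 2 : rat) = 1 by [].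
by rewrite mul1r (dotC u 0) dot0l subr0.
Qed.

Lemma desc_nonneg {l} (u : vec l) :
  (forall k : 'I_l, 0 <= pairing u (simple_root_C k)) -> forall m, 0 <= dot u (e l m).
Proof.
move=> H m; move: {2}(l - m)%N (erefl (l - m)%N) => n.
elim: n m => [|n IH] m Hn.
  have -> : e l m = 0 by apply: e_ge; rewrite -subn_eq0 Hn.
  by rewrite dotC dot0l.
have Hm : (m < l)%N by rewrite -subn_gt0 Hn.
have := H (Ordinal Hm); rewrite pairing_sC /= subr_ge0 => h.
apply: le_trans h; apply: IH; by rewrite subnS Hn.
Qed.

Lemma desc_zero {l} (u : vec l) :
  (forall k : 'I_l, pairing u (simple_root_C k) = 0) -> u = 0.
Proof.
move=> H.
have Hm : forall m, dot u (e l m) = 0.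
  move=> m; move: {2}(l - m)%N (erefl (l - m)%N) => n.
  elim: n m => [|n IH] m Hn.
    have -> : e l m = 0 by apply: e_ge; rewrite -subn_eq0 Hn.
    by rewrite dotC dot0l.
  have Hm : (m < l)%N by rewrite -subn_gt0 Hn.
  have := H (Ordinal Hm); rewrite pairing_sC /= (IH m.+1) ?subr0 //.
  by rewrite subnS Hn.
apply/matrixP => i k; rewrite (ord1 i) -dot_e Hm mxE //.
Qed.

Lemma isInt_den1 (x : rat) : denq x = 1 -> isInt x.
Proof. by move=> H; exists (numq x); rewrite -[LHS]divq_num_den H divr1. Qed.

Lemma isIntB (x y : rat) : isInt x -> isInt y -> isInt (x - y).
Proof. by move=> [a ->] [b ->]; exists (a - b); rewrite rmorphB. Qed.

Lemma e_integral {l} (j : 'I_l) : integral_weight (e l j).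
Proof.
move=> a [i [i' H]]; rewrite /pairing /coroot.
have Ej : forall n, dot (e l j) (e l n) = (j == n :> nat)%:R.
  by move=> n; rewrite dot_ee ltn_ord andbT.
have Ei : forall n, dot (e l i) (e l n) = (i == n :> nat)%:R.
  by move=> n; rewrite dot_ee ltn_ord andbT.
have Ei' : forall n, dot (e l i') (e l n) = (i' == n :> nat)%:R.
  by move=> n; rewrite dot_ee ltn_ord andbT.
case: H => [->|[->|[->|[->|[Hii [->|[->|->]]]]]]];
  rewrite !(dotDl, dotDr, dotNl, dotNr, dotZl, dotZr) ?Ej ?Ei ?Ei' ?eqxx;
  try (have hf : (i == i' :> nat) = false by exact: negbTE Hii);
  try (have hf' : (i' == i :> nat) = false by rewrite eq_sym; exact: negbTE Hii);
  rewrite ?hf ?hf';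
  case: (j == i :> nat); try case: (j == i' :> nat); apply: isInt_den1; by [].
Qed.

Lemma pairing_comb {l} (c : 'I_l -> nat) (w : 'I_l -> vec l) k :
  (forall i, is_fundamental i (w i)) ->
  pairing (\sum_(i < l) (c i)%:R *: w i) (simple_root_C k) = (c k)%:R.
Proof.
move=> Hw; rewrite /pairing dot_suml -(sum_delta (fun i => (c i)%:R) k).
apply: eq_bigr => i _; have := Hw i k; rewrite /pairing => ->; by [].
Qed.

Lemma dom_intro {l} (w : 'I_l -> vec l) (x : vec l) (n : 'I_l -> nat) :
  (forall i, is_fundamental i (w i)) -> integral_weight x ->
  (forall k, pairing x (simple_root_C k) = (n k)%:R) -> dominant x.
Proof.
move=> Hw Hx Hn; exists w, n; split => //; split => //.
apply/eqP; rewrite -subr_eq0; apply/eqP; apply: desc_zero => k.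
by rewrite /pairing dotBl -!/(pairing _ _) Hn pairing_comb // subrr.
Qed.

Lemma dom_nonneg {l} (x : vec l) : dominant x -> forall m, 0 <= dot x (e l m).
Proof.
move=> [w [c [_ [Hw ->]]]]; apply: desc_nonneg => k.
by rewrite pairing_comb.
Qed.

Lemma step {l} (la : vec l) : dominant la -> la <> 0 ->
  exists j : 'I_l, dominant (la - e l j).
Proof.
move=> [w [c [Hint [Hw Hla]]]] Hne.
case: (pickP (fun j => c j != 0%N)) => [j Hj | H0]; last first.
  exfalso; apply: Hne; rewrite Hla big1 // => i _.
  by have := H0 i => /= /negbFE/eqP ->; rewrite scale0r.
exists j; apply: (dom_intro (n := fun k => (c k - (j == k :> nat) + (j == k.+1 :> nat))%N) Hw).
  by move=> a Ha; rewrite /pairing dotBl; apply: isIntB; [apply: Hint | apply: e_integral].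
move=> k; rewrite /pairing dotBl -!/(pairing _ _) Hla pairing_comb //.
rewrite pairing_sC !dot_ee ltn_ord andbT.
case Ejk: (j == k :> nat).
  have Ejk' : j = k by apply: val_inj; apply/eqP.
  subst k; rewrite natrD natrB; last by rewrite lt0n.
  rewrite /= andbT; move: (_ == _) => b; ring.
rewrite andbT /= subn0 natrD; move: (_ == _) => b; ring.
Qed.

Lemma S_tail {l} j : (j <= l)%N ->
  \sum_(i < l | (j <= i)%N) simple_root i = e l j.
Proof.
move=> Hj; move: {2}(l - j)%N (erefl (l - j)%N) => n.
elim: n j Hj => [|n IH] j Hj Hn.
  have Hlj : (l <= j)%N by rewrite -subn_eq0 Hn.
  rewrite e_ge // big_pred0 // => i.
  by apply/negbTE; rewrite -ltnNge (leq_trans (ltn_ord i)).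
have Hjl : (j < l)%N by rewrite -subn_gt0 Hn.
rewrite (bigD1 (Ordinal Hjl)) //=.
rewrite (eq_bigl (fun i : 'I_l => (j.+1 <= i)%N)); last first.
  by move=> i; rewrite ltn_neqAle andbC eq_sym.
by rewrite IH // ?subnS ?Hn // simple_rootE /= subrK.
Qed.

Lemma S_coef {l} j :
  \sum_(i < l) ((j <= i)%N : nat)%:R *: simple_root i
  = \sum_(i < l | (j <= i)%N) simple_root i.
Proof.
rewrite [RHS]big_mkcond /=; apply: eq_bigr => i _.
by case: (j <= i)%N; rewrite ?scale1r ?scale0r.
Qed.

Lemma S_all {l} : (0 < l)%N -> \sum_(i < l) simple_root i = e l 0.
Proof. by move=> _; rewrite -(S_tail (l:=l) (j:=0)) //; apply: eq_bigl. Qed.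

Lemma wle_refl {l} (x : vec l) : wle x x.
Proof. by exists (fun _ => 0%N); rewrite subrr big1 // => i _; rewrite scale0r. Qed.

Lemma wle_sub {l} (x : vec l) (j : 'I_l) : wle (x - e l j) x.
Proof.
exists (fun i => (j <= i)%N : nat); rewrite S_coef S_tail; last exact: ltnW.
by rewrite opprB addrC subrK.
Qed.

Lemma wle_drop {l} (x y : vec l) (j : 'I_l) :
  wle (y + \sum_(i < l) simple_root i) x -> wle y (x - e l j).
Proof.
move=> [c Hc]; exists (fun i => (c i + ((i < j)%N : nat))%N).
under eq_bigr do rewrite natrD scalerDl.
rewrite big_split /= -Hc.
have Hs : \sum_(i < l) simple_root i =
   \sum_(i < l) ((i < j)%N : nat)%:R *: simple_root i + e l j.
  rewrite -(S_tail (ltnW (ltn_ord j))) -S_coef -big_split /=.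
  apply: eq_bigr => i _; rewrite -scalerDl -natrD.
  by rewrite ltnNge; case: (j <= i)%N; rewrite /= scale1r.
rewrite Hs; move: (\sum_(i < l) _) => A.
apply/matrixP => a b; rewrite !mxE; ring.
Qed.

Lemma e_neq0 {l} (j : 'I_l) : e l j <> 0.
Proof.
move=> H; have := congr1 (fun v : vec l => v 0 j) H; rewrite !mxE eqxx.
by move/eqP; rewrite oner_eq0.
Qed.

Lemma sub_eq_self {l} (x y : vec l) : x - y = x -> y = 0.
Proof.
move=> H; have := congr1 (fun v => x - v) H.
by rewrite /= opprB addrC subrK subrr.
Qed.

Theorem mainTheorem5 (l : nat) (hl : (1 <= l)%N) (la mu nu : vec l) :
  dominant la -> dominant mu -> dominant nu -> ~ low_triple la mu nu.
Proof.
move=> Dla Dmu Dnu [Hlow Hle].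
case: (eqVneq la 0) => [Hla0|Hla].
  case: (eqVneq mu 0) => [Hmu0|Hmu].
    subst la mu; move: Hle => [c Hc].
    have := congr1 (fun v => dot v (e l 0)) Hc.
    rewrite /= dot_suml S_all // addr0 sub0r dotNl dotDl dot_ee eqxx hl /=.
    have H1 : 0 <= \sum_(i < l) (c i)%:R * dot (simple_root i) (e l 0).
      apply: sumr_ge0 => i _; apply: mulr_ge0 => //.
      by rewrite simple_rootE dotBl !dot_ee /= ?andbF subr0 ler0n.
    have H2 := dom_nonneg Dnu 0.
    move=> H3; rewrite -H3 in H1; move: H1 H2; move: (dot nu _) => d; lra.
  have [j Dj] := step Dmu (elimN eqP Hmu).
  have [_ H] := Hlow la (mu - e l j) Dla Dj (wle_refl la) (wle_sub mu j)
    (ltac:(rewrite addrA; exact: wle_drop)).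
  exact: (e_neq0 (sub_eq_self H)).
have [j Dj] := step Dla (elimN eqP Hla).
have [H _] := Hlow (la - e l j) mu Dj Dmu (wle_sub la j) (wle_refl mu)
  (ltac:(rewrite addrAC; exact: wle_drop)).
exact: (e_neq0 (sub_eq_self H)).
Qed.
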